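(* Let $\{S(t)\}_{t\ge0}$ be a semigroup on a complete metric space $(X,d)$ and let $B\subseteq X$ be a positively invariant bounded set. Let $\varphi:\mathbb{R}^+\to\mathbb{R}^+$ satisfy $\varphi(t)\to0$ as $t\to+\infty$, and let $T>0$. Suppose that for every $t\ge T$ and every $\epsilon>0$ there exists a function $\Phi_{t,\epsilon}:X\times X\to\mathbb{R}^+$ which is contractive on $B\times B$, i.e. $$\liminf_{m\to\infty}\liminf_{n\to\infty}\Phi_{t,\epsilon}(y_n,y_m)=0\quad\text{for every sequence }\{y_n\}\subseteq B,$$ and such that $$d(S(t)y_1,S(t)y_2)\le\varphi(t)+\epsilon+\Phi_{t,\epsilon}(y_1,y_2)\quad\forall y_1,y_2\in B .$$ Then $\alpha(S(t)B)\le3\varphi(t)$ for all $t\ge T$.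
   Context: A semigroup $\{S(t)\}_{t\ge0}$ on $X$ is a family of continuous maps $S(t):X\to X$ with $S(0)=I$, $S(t+s)=S(t)S(s)$. $B$ positively invariant means $S(t)B\subseteq B$ for all $t\ge0$. $\alpha$ is the Kuratowski measure of noncompactness, $\alpha(B)=\inf\{\delta>0:B\text{ has a finite cover by sets of diameter}<\delta\}$. *)

(* Defs.v *)
From Stdlib Require Import Reals List.
From Coquelicot Require Import Coquelicot.
Open Scope R_scope.

Definition is_metric {X : Type} (d : X -> X -> R) : Prop :=
  (forall x y, 0 <= d x y) /\
  (forall x y, d x y = 0 <-> x = y) /\
  (forall x y, d x y = d y x) /\
  (forall x y z, d x z <= d x y + d y z).

Definition cauchy_seq {X : Type} (d : X -> X -> R) (u : nat -> X) : Prop :=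
  forall eps, 0 < eps -> exists N, forall m n, (N <= m)%nat -> (N <= n)%nat ->
    d (u m) (u n) < eps.

Definition converges_to {X : Type} (d : X -> X -> R) (u : nat -> X) (l : X) : Prop :=
  forall eps, 0 < eps -> exists N, forall n, (N <= n)%nat -> d (u n) l < eps.

Definition complete_metric {X : Type} (d : X -> X -> R) : Prop :=
  is_metric d /\ forall u, cauchy_seq d u -> exists l, converges_to d u l.

Definition d_continuous {X : Type} (d : X -> X -> R) (f : X -> X) : Prop :=
  forall x eps, 0 < eps -> exists delta, 0 < delta /\
    forall y, d x y < delta -> d (f x) (f y) < eps.

Definition is_semigroup {X : Type} (d : X -> X -> R) (S : R -> X -> X) : Prop :=
  (forall t, 0 <= t -> d_continuous d (S t)) /\
  (forall x, S 0 x = x) /\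
  (forall t s x, 0 <= t -> 0 <= s -> S (t + s) x = S t (S s x)).

Definition pos_invariant {X : Type} (S : R -> X -> X) (B : X -> Prop) : Prop :=
  forall t x, 0 <= t -> B x -> B (S t x).

Definition bounded_set {X : Type} (d : X -> X -> R) (B : X -> Prop) : Prop :=
  exists r, forall x y, B x -> B y -> d x y <= r.

Definition image {X : Type} (f : X -> X) (A : X -> Prop) : X -> Prop :=
  fun y => exists x, A x /\ y = f x.

(* diameter (in Rbar; -oo for the empty set, +oo if unbounded) *)
Definition diam {X : Type} (d : X -> X -> R) (A : X -> Prop) : Rbar :=
  Rbar_lub (fun r => exists x y, A x /\ A y /\ r = Finite (d x y)).

Definition finite_cover_diam_lt {X : Type} (d : X -> X -> R) (A : X -> Prop)
  (delta : R) : Prop :=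
  exists Cs : list (X -> Prop),
    (forall C, In C Cs -> Rbar_lt (diam d C) (Finite delta)) /\
    (forall x, A x -> exists C, In C Cs /\ C x).

Definition kuratowski {X : Type} (d : X -> X -> R) (A : X -> Prop) : Rbar :=
  Rbar_glb (fun v => exists delta, v = Finite delta /\ 0 < delta /\
                                   finite_cover_diam_lt d A delta).

Definition liminf (u : nat -> Rbar) : Rbar :=
  Rbar_lub (fun l => exists N, l = Rbar_glb (fun v => exists n, (N <= n)%nat /\ v = u n)).

Definition contractive_on {X : Type} (Phi : X -> X -> R) (B : X -> Prop) : Prop :=
  forall y : nat -> X, (forall n, B (y n)) ->
    liminf (fun m => liminf (fun n => Finite (Phi (y n) (y m)))) = Finite 0.

(* Main.v *)
Require Import Defs.
From Stdlib Require Import Reals List Lra Lia Classical ClassicalEpsilon.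
From Coquelicot Require Import Coquelicot.
Open Scope R_scope.

Lemma lub_c (E : Rbar -> Prop) : Rbar_is_lub E (Rbar_lub E).
Proof. exact (proj2_sig (Rbar_ex_lub E)). Qed.
Lemma glb_c (E : Rbar -> Prop) : Rbar_is_glb E (Rbar_glb E).
Proof. exact (proj2_sig (Rbar_ex_glb E)). Qed.

Lemma liminf_ge (u : nat -> Rbar) (c : Rbar) (N : nat) :
  (forall n, (N <= n)%nat -> Rbar_le c (u n)) -> Rbar_le c (liminf u).
Proof.
  intros H. unfold liminf.
  set (g := Rbar_glb (fun v => exists n, (N <= n)%nat /\ v = u n)).
  apply Rbar_le_trans with g.
  - destruct (glb_c (fun v => exists n, (N <= n)%nat /\ v = u n)) as [_ H2].
    apply H2. intros x [n [Hn ->]]. now apply H.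
  - destruct (lub_c (fun l => exists N, l = Rbar_glb (fun v => exists n, (N <= n)%nat /\ v = u n))) as [H1 _].
    apply H1. exists N. reflexivity.
Qed.

Lemma diam_ball {X : Type} (d : X -> X -> R) (c : X) (r : R) :
  is_metric d -> Rbar_le (diam d (fun x => d c x < r)) (Finite (2 * r)).
Proof.
  intros [_ [_ [Hs Ht]]]. unfold diam.
  destruct (lub_c (fun r0 => exists x y, d c x < r /\ d c y < r /\ r0 = Finite (d x y))) as [_ H2].
  apply H2. intros z [x [y [Hx [Hy ->]]]]. simpl.
  pose proof (Ht x c y). rewrite (Hs x c) in H. lra.
Qed.

Lemma cover {X : Type} (d : X -> X -> R) (S : R -> X -> X) (B : X -> Prop)
  (Phi : X -> X -> R) (t a eps : R) :
  is_metric d -> 0 < eps -> contractive_on Phi B ->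
  (forall y1 y2, B y1 -> B y2 -> d (S t y1) (S t y2) <= a + eps + Phi y1 y2) ->
  exists l : list X, forall x, image (S t) B x ->
     exists z, In z l /\ B z /\ d (S t z) x < a + 2 * eps.
Proof.
  intros Hm Heps Hc Hd.
  destruct (classic (exists l : list X, forall x, image (S t) B x ->
     exists z, In z l /\ B z /\ d (S t z) x < a + 2 * eps)) as [H|H]; [exact H|].
  exfalso.
  assert (Hn : forall l : list X, exists y, B y /\
     forall z, In z l -> B z -> a + 2 * eps <= d (S t z) (S t y)).
  { intros l. apply NNPP. intros Hl. apply H. exists l. intros x [y [By ->]].
    apply NNPP. intros Hx. apply Hl. exists y. split; [exact By|].
    intros z Iz Bz. apply Rnot_lt_le. intros Hlt. apply Hx. exists z. auto. }
  set (next := fun l => proj1_sig (constructive_indefinite_description _ (Hn l))).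
  assert (Hnext : forall l, B (next l) /\
     forall z, In z l -> B z -> a + 2 * eps <= d (S t z) (S t (next l))).
  { intros l. exact (proj2_sig (constructive_indefinite_description _ (Hn l))). }
  set (pts := fix pts (n : nat) : list X :=
         match n with O => nil | S n' => next (pts n') :: pts n' end).
  set (y := fun n => next (pts n)).
  assert (HB : forall n, B (y n)) by (intros n; apply Hnext).
  assert (Hin : forall m n, (m < n)%nat -> In (y m) (pts n)).
  { intros m n; induction n as [|n IH]; intros Hmn; [lia|].
    simpl. destruct (Nat.eq_dec m n) as [->|Hne]; [now left|right; apply IH; lia]. }
  destruct Hm as [H0 [Hz [Hs Ht]]].
  assert (Hsep : forall m n, m <> n -> eps <= Phi (y n) (y m)).
  { intros m n Hne.
    assert (a + 2 * eps <= d (S t (y n)) (S t (y m))).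
    { destruct (Nat.lt_total m n) as [Hl|[Hl|Hl]]; [| lia |].
      - rewrite Hs. apply (proj2 (Hnext (pts n))); [now apply Hin|apply HB].
      - apply (proj2 (Hnext (pts m))); [now apply Hin|apply HB]. }
    pose proof (Hd (y n) (y m) (HB n) (HB m)). lra. }
  pose proof (Hc y HB) as H0'.
  assert (Rbar_le (Finite eps)
     (liminf (fun m => liminf (fun n => Finite (Phi (y n) (y m)))))).
  { apply liminf_ge with O. intros m _.
    apply liminf_ge with (Datatypes.S m). intros n Hn2. simpl. apply Hsep. lia. }
  rewrite H0' in H1. simpl in H1. lra.
Qed.

Theorem theorem4p4 (X : Type) (d : X -> X -> R) (S : R -> X -> X)
  (B : X -> Prop) (phi : R -> R) (T : R) :
  complete_metric d ->
  is_semigroup d S ->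
  pos_invariant S B ->
  bounded_set d B ->
  (forall t, 0 <= t -> 0 <= phi t) ->
  is_lim phi p_infty 0 ->
  0 < T ->
  (forall t eps, T <= t -> 0 < eps ->
     exists Phi : X -> X -> R,
       (forall x y, 0 <= Phi x y) /\
       contractive_on Phi B /\
       (forall y1 y2, B y1 -> B y2 ->
          d (S t y1) (S t y2) <= phi t + eps + Phi y1 y2)) ->
  forall t, T <= t -> Rbar_le (kuratowski d (image (S t) B)) (Finite (3 * phi t)).
Proof.
  intros [Hm _] _ _ _ Hphi _ HT Hyp t Ht.
  assert (Hp : 0 <= phi t) by (apply Hphi; lra).
  assert (Hk : forall e, 0 < e -> Rbar_le (kuratowski d (image (S t) B)) (Finite (3 * phi t + e))).
  { intros e He.
    destruct (Hyp t (e / 5) Ht ltac:(lra)) as [Phi [_ [Hc Hd]]].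
    destruct (cover d S B Phi t (phi t) (e / 5) Hm ltac:(lra) Hc Hd) as [l Hl].
    unfold kuratowski.
    destruct (glb_c (fun v => exists delta, v = Finite delta /\ 0 < delta /\
                                   finite_cover_diam_lt d (image (S t) B) delta)) as [H1 _].
    apply H1. exists (3 * phi t + e). split; [reflexivity|]. split; [lra|].
    exists (map (fun z => fun x => d (S t z) x < phi t + 2 * (e / 5)) l). split.
    - intros C HC. apply in_map_iff in HC. destruct HC as [z [<- _]].
      eapply Rbar_le_lt_trans; [apply diam_ball; exact Hm|]. simpl. lra.
    - intros x Hx. destruct (Hl x Hx) as [z [Hz [_ Hdz]]].
      exists (fun x => d (S t z) x < phi t + 2 * (e / 5)). split; [|exact Hdz].
      apply in_map_iff. exists z. auto. }
  destruct (kuratowski d (image (S t) B)) as [g| |] eqn:Hg.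
  - simpl. apply Rnot_lt_le. intros Hlt.
    specialize (Hk ((g - 3 * phi t) / 2) ltac:(lra)). simpl in Hk. lra.
  - specialize (Hk 1 ltac:(lra)). simpl in Hk. contradiction.
  - simpl. exact I.
Qed.
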